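(* Consider the data-center model with three levels of data locality operated under the Balanced-Pandas algorithm (see context). For every arrival rate vector $\boldsymbol\lambda\in\Lambda$, the Markov chain $\{Z(t)=(\bar{\mathbf Q}(t),\mathbf f(t)),t\ge0\}$ is positive recurrent; i.e., Balanced-Pandas is throughput optimal.
   Context: Model. Time is slotted. There are $M$ servers $\mathcal M=\{1,\dots,M\}$ partitioned into racks; $K(m)$ is the rack of server $m$. A task type $\bar L$ is a $3$-element subset of $\mathcal M$; $\mathcal L$ is the set of types. For type $\bar L$, servers in $\bar L$ are local, $\bar L_k=\{m\notin\bar L:\exists n\in\bar L,K(m)=K(n)\}$ rack-local, $\bar L_r=\mathcal M\setminus(\bar L\cup\bar L_k)$ remote. At the start of slot $t$, $A_{\bar L}(t)$ type-$\bar L$ tasks arrive (independent across types, i.i.d. over time, mean $\lambda_{\bar L}$, total per slot bounded). Service times are geometric with means $1/\alpha,1/\beta,1/\gamma$ for local, rack-local, remote service, $1\ge\alpha>\beta>\gamma>0$; one task per server at a time, non-preemptive. Capacity region $\Lambda$: the set of $\boldsymbol\lambda$ for which there exist $\lambda_{\bar L,m}\ge0$ with $\lambda_{\bar L}=\sum_m\lambda_{\bar L,m}$ and $\sum_{\bar L:m\in\bar L}\lambda_{\bar L,m}/\alpha+\sum_{\bar L:m\in\bar L_k}\lambda_{\bar L,m}/\beta+\sum_{\bar L:m\in\bar L_r}\lambda_{\bar L,m}/\gamma<1$ for all $m$. Balanced-Pandas. Each server $m$ has three sub-queues $Q^l_m,Q^k_m,Q^r_m$ holding tasks routed to $m$ that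 are local, rack-local, remote to $m$ respectively. Workload $W_m(t)=Q^l_m(t)/\alpha+Q^k_m(t)/\beta+Q^r_m(t)/\gamma$. Routing: an arriving type-$\bar L$ task is routed to a server in $\arg\min_{m\in\mathcal M}\{\frac{W_m(t)}{\alpha}I_{\{m\in\bar L\}},\frac{W_m(t)}{\beta}I_{\{m\in\bar L_k\}},\frac{W_m(t)}{\gamma}I_{\{m\in\bar L_r\}}\}$ (ties random), joining its local, rack-local or remote sub-queue accordingly. Scheduling: an idle server $m$ serves a task from $Q^l_m$ if nonempty, else from $Q^k_m$ if nonempty, else from $Q^r_m$, else stays idle. Working status $f_m(t)\in\{-1,0,1,2\}$: idle, serving from $Q^l_m$, $Q^k_m$, $Q^r_m$. $\bar{\mathbf Q}(t)$ is the vector of all sub-queue lengths, $\mathbf f(t)=(f_1,\dots,f_M)$. Throughput optimal: the chain is positive recurrent for every $\boldsymbol\lambda\in\Lambda$. *)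

(* Defs.v *)
(* Balanced-Pandas with three levels of data locality,
   modelled as a discrete-time Markov chain with an explicit one-step
   transition law (finitely supported, since arrivals are bounded). *)
From mathcomp Require Import all_boot all_order all_algebra.
From mathcomp Require Import reals.
Set Implicit Arguments. Unset Strict Implicit. Unset Printing Implicit Defensive.
Import Order.TTheory GRing.Theory Num.Theory.
Local Open Scope ring_scope.

Section FinDist.
Variable R : numDomainType.
Definition dist (T : Type) := seq (R * T).
Definition dret (T : Type) (x : T) : dist T := [:: (1, x)].
Definition dbind (T U : Type) (d : dist T) (f : T -> dist U) : dist U :=
  flatten [seq [seq (p.1 * q.1, q.2) | q <- f p.2] | p <- d].
Definition dprob (T : eqType) (d : dist T) (y : T) : R :=
  \sum_(p <- d | p.2 == y) p.1.
Definition diter (T A : Type) (f : T -> A -> dist T) (s : seq A) (x : T) : dist T :=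
  foldl (fun d a => dbind d (fun y => f y a)) (dret x) s.
Definition is_pmf (T : Type) (d : dist T) : Prop :=
  all (fun p => 0 <= p.1) d /\ \sum_(p <- d) p.1 = 1.
Definition mean (d : dist nat) : R := \sum_(p <- d) p.1 * (p.2)%:R.
End FinDist.
Arguments dret {R T} x.
Arguments dbind {R T U} d f.
Arguments diter {R T A} f s x.
Arguments dprob {R T} d y.
Arguments is_pmf {R T} d.
Arguments mean {R} d.

Section Model.
Variable R : realType.
(* M servers; K m = rack of server m; service rates alpha, beta, gamma *)
Variables (M : nat) (K : 'I_M -> nat) (alpha beta gamma : R).

(* sub-queue / locality classes: 0 = local, 1 = rack-local, 2 = remote *)
Definition Cl : 'I_3 := @Ordinal 3 0 isT.
Definition Ck : 'I_3 := @Ordinal 3 1 isT.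
Definition Cr : 'I_3 := @Ordinal 3 2 isT.
Definition rate (c : 'I_3) : R :=
  if c == Cl then alpha else if c == Ck then beta else gamma.

Definition cls (L : {set 'I_M}) (m : 'I_M) : 'I_3 :=
  if m \in L then Cl else if [exists n in L, K n == K m] then Ck else Cr.

Definition is_type (L : {set 'I_M}) : bool := #|L| == 3%N.
Definition types : seq {set 'I_M} := enum [pred L : {set 'I_M} | is_type L].

(* state: sub-queue lengths Q (m, c) and working status f m
   (None = idle (-1), Some c = serving a task taken from sub-queue c) *)
Definition qstate := {ffun 'I_M * 'I_3 -> nat}.
Definition fstate := {ffun 'I_M -> option 'I_3}.
Definition state := (qstate * fstate)%type.

Definition W (Q : qstate) (m : 'I_M) : R := \sum_(c < 3) (Q (m, c))%:R / rate c.
Definition cost (Q : qstate) (L : {set 'I_M}) (m : 'I_M) : R := W Q m / rate (cls L m).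
Definition best (Q : qstate) (L : {set 'I_M}) : {set 'I_M} :=
  [set m | [forall m', cost Q L m <= cost Q L m']].
Definition unif (S : {set 'I_M}) : dist R 'I_M := [seq (#|S|%:R^-1, m) | m <- enum S].
Definition incq (Q : qstate) (i : 'I_M * 'I_3) : qstate := [ffun j => (Q j + (j == i))%N].

(* route one type-L task, workloads taken at the start of the slot (Q0),
   ties broken uniformly at random *)
Definition route1 (Q0 : qstate) (L : {set 'I_M}) (Q : qstate) : dist R qstate :=
  dbind (unif (best Q0 L)) (fun m => dret (incq Q (m, cls L m))).

(* arr L = distribution of the number of type-L arrivals in a slot *)
Variable arr : {set 'I_M} -> dist R nat.
Definition arrive_type (Q0 Q : qstate) (L : {set 'I_M}) : dist R qstate :=
  dbind (arr L) (fun n => diter (fun Q' (_ : nat) => route1 Q0 L Q') (iota 0 n) Q).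
Definition arrive (Q0 : qstate) : dist R qstate := diter (arrive_type Q0) types Q0.

Definition pickq (Q : qstate) (m : 'I_M) : option 'I_3 :=
  if (0 < Q (m, Cl))%N then Some Cl
  else if (0 < Q (m, Ck))%N then Some Ck
  else if (0 < Q (m, Cr))%N then Some Cr else None.
Definition newf (Q : qstate) (f : fstate) : fstate :=
  [ffun m => if f m is Some c then Some c else pickq Q m].
(* a task leaves its sub-queue when it enters service *)
Definition newQ (Q : qstate) (f : fstate) : qstate :=
  [ffun i => (Q i - ((f i.1 == None) && (pickq Q i.1 == Some i.2)))%N].

(* geometric services: a busy server completes its task w.p. rate c *)
Definition serve1 (f : fstate) (m : 'I_M) : dist R fstate :=
  if f m is Some c then
    [:: (rate c, [ffun j => if j == m then None else f j]); (1 - rate c, f)]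
  else dret f.
Definition serve (f : fstate) : dist R fstate := diter serve1 (enum 'I_M) f.

Definition step (z : state) : dist R state :=
  dbind (arrive z.1) (fun Q1 =>
    dbind (serve (newf Q1 z.2)) (fun f3 => dret (newQ Q1 z.2, f3))).

Definition trans (z z' : state) : R := dprob (step z) z'.

(* tail B n z = P_z(Z(1) \notin B, ..., Z(n) \notin B) = P_z(sigma_B > n),
   sigma_B = inf {t >= 1 : Z(t) \in B} *)
Fixpoint tail (B : seq state) (n : nat) (z : state) : R :=
  if n is n'.+1 then \sum_(p <- step z | p.2 \notin B) p.1 * tail B n' p.2 else 1.

(* positive recurrence: there is a finite set B of states whose
   expected first-passage time E_z[sigma_B] = sum_n P_z(sigma_B > n)
   is finite from every initial state z *)
Definition positive_recurrent : Prop :=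
  exists B : seq state, forall z : state,
    exists C : R, forall N : nat, \sum_(n < N) tail B n z <= C.

End Model.

Definition in_capacity (R : realType) (M : nat) (K : 'I_M -> nat)
  (alpha beta gamma : R) (lam : {set 'I_M} -> R) : Prop :=
  exists lm : {set 'I_M} -> 'I_M -> R,
    (forall L m, 0 <= lm L m) /\
    (forall L, is_type L -> lam L = \sum_(m < M) lm L m) /\
    (forall m : 'I_M,
       \sum_(L : {set 'I_M} | is_type L) lm L m / rate alpha beta gamma (cls K L m) < 1).

(* Main.v *)
Require Import Defs.
From mathcomp Require Import all_boot all_order all_algebra reals.
From mathcomp Require Import ring lra zify.
Import Order.TTheory GRing.Theory Num.Theory.
Local Open Scope ring_scope.

Module P1.
Import Order.TTheory GRing.Theory Num.Theory.
Local Open Scope ring_scope.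
Set Implicit Arguments. Unset Strict Implicit. Unset Printing Implicit Defensive.

Section Gen.
Variable R : realType.

Lemma all_flat (X : Type) (a : pred X) (ss : seq (seq X)) :
  all a (flatten ss) = all (all a) ss.
Proof. by elim: ss => //= s ss IH; rewrite all_cat IH. Qed.

Definition E (T : eqType) (d : dist R T) (h : T -> R) : R := \sum_(p <- d) p.1 * h p.2.
Definition nng (T : eqType) (d : dist R T) : bool := all (fun p => 0 <= p.1) d.
Definition mass (T : eqType) (d : dist R T) : R := \sum_(p <- d) p.1.

Lemma E_ret (T : eqType) (x : T) h : E (dret x) h = h x.
Proof. by rewrite /E /dret big_seq1 /= mul1r. Qed.

Lemma E_bind (T U : eqType) (d : dist R T) (g : T -> dist R U) h :
  E (dbind d g) h = E d (fun x => E (g x) h).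
Proof.
rewrite /E /dbind big_flatten big_map /=; apply: eq_bigr => p _.
rewrite big_map mulr_sumr; apply: eq_bigr => q _ /=; by rewrite mulrA.
Qed.

Lemma mass_bind (T U : eqType) (d : dist R T) (g : T -> dist R U) :
  mass (dbind d g) = E d (fun x => mass (g x)).
Proof.
rewrite /E /mass /dbind big_flatten big_map /=; apply: eq_bigr => p _.
by rewrite big_map mulr_sumr.
Qed.

Lemma nng_bind (T U : eqType) (d : dist R T) (g : T -> dist R U) :
  nng d -> (forall x, nng (g x)) -> nng (dbind d g).
Proof.
rewrite /nng => /allP hd hg; rewrite /dbind all_flat; apply/allP => s /mapP [p pd ->].
rewrite all_map; apply/allP => q qg /=; apply: mulr_ge0; first exact: hd.
by move/allP: (hg p.2) => /(_ q qg).
Qed.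



Lemma E_add (T : eqType) (d : dist R T) h g : E d (fun x => h x + g x) = E d h + E d g.
Proof. by rewrite /E -big_split; apply: eq_bigr => p _; rewrite mulrDr. Qed.

Lemma E_scale (T : eqType) (d : dist R T) c h : E d (fun x => c * h x) = c * E d h.
Proof. by rewrite /E mulr_sumr; apply: eq_bigr => p _; rewrite mulrCA. Qed.

Lemma E_const (T : eqType) (d : dist R T) c : E d (fun _ => c) = c * mass d.
Proof. by rewrite /E /mass mulr_sumr; apply: eq_bigr => p _; rewrite mulrC. Qed.

Lemma E_sum (T : eqType) (I : Type) (r : seq I) (d : dist R T) (h : I -> T -> R) :
  E d (fun x => \sum_(i <- r) h i x) = \sum_(i <- r) E d (h i).
Proof.
rewrite /E exchange_big /=; apply: eq_bigr => p _; by rewrite mulr_sumr.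
Qed.

Lemma E_le (T : eqType) (d : dist R T) (P : pred T) h g : nng d -> all (fun p => P p.2) d ->
  (forall x, P x -> h x <= g x) -> E d h <= E d g.
Proof.
rewrite /nng; move=> /allP hn /allP hP hl; rewrite /E big_seq [X in _ <= X]big_seq.
apply: ler_sum => p pd; apply: ler_wpM2l; [exact: hn | apply: hl; exact: hP].
Qed.

Lemma E_ge0 (T : eqType) (d : dist R T) h : nng d -> (forall x, 0 <= h x) -> 0 <= E d h.
Proof.
rewrite /nng; move=> /allP hn hh; rewrite /E big_seq; apply: sumr_ge0 => p pd.
apply: mulr_ge0; [exact: hn | exact: hh].
Qed.

Lemma all_true (T : eqType) (d : dist R T) : all (fun p => predT p.2) d.
Proof. by apply/allP. Qed.

Lemma diter_rcons (T A : eqType) (f : T -> A -> dist R T) s a x :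
  diter f (rcons s a) x = dbind (diter f s x) (fun y => f y a).
Proof. by rewrite /diter foldl_rcons. Qed.

Lemma diter_nil (T A : eqType) (f : T -> A -> dist R T) x : diter f [::] x = dret x.
Proof. by []. Qed.

Lemma diter_nng (T A : eqType) (f : T -> A -> dist R T) s x :
  (forall y a, a \in s -> nng (f y a)) -> nng (diter f s x).
Proof.
elim/last_ind: s => [|s a IH] H; first by rewrite /nng /= ler01.
rewrite diter_rcons; apply: nng_bind.
  by apply: IH => y b bs; apply: H; rewrite mem_rcons in_cons bs orbT.
by move=> y; apply: H; rewrite mem_rcons mem_head.
Qed.

Lemma diter_mass (T A : eqType) (f : T -> A -> dist R T) s x :
  (forall y a, a \in s -> mass (f y a) = 1) -> mass (diter f s x) = 1.
Proof.
elim/last_ind: s => [|s a IH] H; first by rewrite /mass big_seq1.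
rewrite diter_rcons mass_bind.
have -> : E (diter f s x) (fun y => mass (f y a)) = E (diter f s x) (fun _ => 1).
  by apply: eq_bigr => p _; rewrite H // mem_rcons mem_head.
rewrite E_const mul1r; apply: IH => y b bs; apply: H; by rewrite mem_rcons in_cons bs orbT.
Qed.

Lemma diter_all (T A : eqType) (f : T -> A -> dist R T) (P : seq A -> T -> bool) s x :
  P [::] x -> (forall s' a y, P s' y -> all (fun p => P (rcons s' a) p.2) (f y a)) ->
  all (fun p => P s p.2) (diter f s x).
Proof.
move=> P0 HP; elim/last_ind: s => [|s a IH]; first by rewrite /= P0.
rewrite diter_rcons /dbind all_flat; apply/allP => l /mapP [p pd ->].
rewrite all_map; apply/allP => q qf /=.
move/allP: IH => /(_ p pd) /= Hp.
by move/allP: (HP s a p.2 Hp) => /(_ q qf).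
Qed.

Lemma diter_E (T A : eqType) (f : T -> A -> dist R T) (Phi : T -> R) (k : A -> R) s x :
  (forall y a, a \in s -> nng (f y a) /\ mass (f y a) = 1 /\ E (f y a) Phi <= Phi y + k a) ->
  E (diter f s x) Phi <= Phi x + \sum_(a <- s) k a.
Proof.
elim/last_ind: s => [|s a IH] H; first by rewrite E_ret big_nil addr0.
have Hs : forall y b, b \in s -> nng (f y b) /\ mass (f y b) = 1 /\ E (f y b) Phi <= Phi y + k b.
  by move=> y b bs; apply: H; rewrite mem_rcons in_cons bs orbT.
have Ha := H ^~ a; rewrite mem_rcons mem_head in Ha.
rewrite diter_rcons E_bind -cats1 big_cat big_seq1 /=.
apply: (@le_trans _ _ (E (diter f s x) (fun y => Phi y + k a))).
  apply: (@E_le _ _ predT) => //; last by move=> y _; case: (Ha y isT) => _ [].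
    by apply: diter_nng => y b bs; case: (Hs y b bs).
  exact: all_true.
rewrite E_add E_const (diter_mass (f:=f) (s:=s) x (fun y b bs => proj1 (proj2 (Hs y b bs)))) mulr1.
by rewrite addrA lerD2r; apply: IH.
Qed.

End Gen.

End P1.
Import P1.

Module P2.
Import Order.TTheory GRing.Theory Num.Theory.
Local Open Scope ring_scope.
Set Implicit Arguments. Unset Strict Implicit. Unset Printing Implicit Defensive.

Section Foster.
Variables (R : realType) (M : nat) (K : 'I_M -> nat) (alpha beta gamma : R)
  (arr : {set 'I_M} -> dist R nat).
Notation step := (step K alpha beta gamma arr).
Notation tail := (tail K alpha beta gamma arr).

Definition S B N z := \sum_(n < N) tail B n z.

Lemma S_succ B N z : S B N.+1 z =
  1 + \sum_(p <- step z | p.2 \notin B) p.1 * S B N p.2.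
Proof.
rewrite /S big_ord_recl /=; congr (_ + _).
under eq_bigr => i _ do rewrite /bump /=.
rewrite exchange_big /=; apply: eq_bigr => p _; by rewrite mulr_sumr.
Qed.

Lemma S_bound B (V : state M -> R) N z : nng (step z) -> (forall z, 0 <= V z) ->
  (forall y, y \notin B -> S B N y <= V y) -> S B N.+1 z <= 1 + E (step z) V.
Proof.
rewrite /nng => /allP hn hV hS; rewrite S_succ lerD2l /E.
rewrite big_mkcond /= big_seq [X in _ <= X]big_seq; apply: ler_sum => p pd.
case: ifP => pB; last by apply: mulr_ge0; [exact: hn | exact: hV].
by apply: ler_wpM2l; [exact: hn | exact: hS].
Qed.

Lemma foster (B : seq (state M)) (V : state M -> R) :
  (forall z, nng (step z)) -> (forall z, 0 <= V z) ->
  (forall z, z \notin B -> E (step z) V <= V z - 1) ->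
  positive_recurrent K alpha beta gamma arr.
Proof.
move=> hn hV hd; exists B.
have IH : forall N z, z \notin B -> S B N z <= V z.
  elim=> [|n IH] y yB; first by rewrite /S big_ord0.
  have := S_bound (hn y) hV IH; have := hd y yB; lra.
move=> z; exists (1 + E (step z) V) => -[|N].
  rewrite big_ord0; have := E_ge0 (hn z) hV; lra.
exact: S_bound (hn z) hV (IH N).
Qed.
End Foster.

End P2.
Import P2.

Module P3.
Import Order.TTheory GRing.Theory Num.Theory.
Local Open Scope ring_scope.
Set Implicit Arguments. Unset Strict Implicit. Unset Printing Implicit Defensive.

Section Model.
Variables (R : realType) (M : nat) (K : 'I_M -> nat) (alpha beta gamma : R)
  (arr : {set 'I_M} -> dist R nat).
Hypotheses (hg : 0 < gamma) (hgb : gamma < beta) (hba : beta < alpha) (ha1 : alpha <= 1).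
Hypothesis harr : forall L : {set 'I_M}, is_type L -> is_pmf (arr L).

Notation r := (rate alpha beta gamma).
Ltac rl := move: hg hgb hba ha1; lra.

Lemma r_ge c : gamma <= r c.
Proof. rewrite /rate; case: ifP => _; [rl|case: ifP => _; rl]. Qed.
Lemma r_le1 c : r c <= 1.
Proof. rewrite /rate; case: ifP => _; [rl|case: ifP => _; rl]. Qed.
Lemma r_gt0 c : 0 < r c.
Proof. have := r_ge c; rl. Qed.
Lemma rinv_le c : (r c)^-1 <= gamma^-1.
Proof. by rewrite lef_pV2 ?posrE ?r_gt0 // r_ge. Qed.
Lemma rinv_ge1 c : 1 <= (r c)^-1.
Proof. by rewrite invf_ge1 ?r_gt0 ?r_le1. Qed.

Lemma serve1_nng (f : fstate M) (m : 'I_M) : nng (serve1 alpha beta gamma f m).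
Proof.
rewrite /serve1; case: (f m) => [c|] /=; last by rewrite ler01.
by rewrite (ltW (r_gt0 c)) /= subr_ge0 r_le1.
Qed.
Lemma serve1_mass (f : fstate M) (m : 'I_M) : mass (serve1 alpha beta gamma f m) = 1.
Proof.
rewrite /serve1 /mass; case: (f m) => [c|]; last by rewrite big_seq1.
by rewrite big_cons big_seq1 /=; ring.
Qed.
Lemma serve_nng (f : fstate M) : nng (serve alpha beta gamma f).
Proof. by apply: diter_nng => y a _; apply: serve1_nng. Qed.
Lemma serve_mass (f : fstate M) : mass (serve alpha beta gamma f) = 1.
Proof. by apply: diter_mass => y a _; apply: serve1_mass. Qed.

Lemma unif_nng (S : {set 'I_M}) : nng (unif R S).
Proof. by rewrite /nng /unif all_map; apply/allP => m _ /=; rewrite invr_ge0 ler0n. Qed.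
Lemma unif_mass (S : {set 'I_M}) : (0 < #|S|)%N -> mass (unif R S) = 1.
Proof.
move=> S0; rewrite /mass /unif big_map big_const_seq /= count_predT -cardE.
have hS : (#|S|%:R : R) != 0 by rewrite pnatr_eq0 -lt0n.
by rewrite iter_addr_0; apply/eqP; rewrite -(mulr_natr (#|S|%:R^-1 : R)) mulVf.
Qed.
Lemma unif_supp (S : {set 'I_M}) : all (fun p => p.2 \in S) (unif R S).
Proof. by rewrite /unif all_map; apply/allP => m; rewrite mem_enum. Qed.

Lemma route1_nng (Q0 : qstate M) L (Q : qstate M) : nng (route1 K alpha beta gamma Q0 L Q).
Proof. apply: nng_bind; first exact: unif_nng. by move=> x; rewrite /nng /= ler01. Qed.

Lemma arrive_type_nng (Q0 Q : qstate M) L : is_type L -> nng (arrive_type K alpha beta gamma arr Q0 Q L).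
Proof.
move=> tL; apply: nng_bind; first by case: (harr tL).
move=> n; apply: diter_nng => y a _; exact: route1_nng.
Qed.

Lemma types_is_type (L : {set 'I_M}) : L \in types M -> is_type L.
Proof. by rewrite /types mem_enum. Qed.

Lemma arrive_nng (Q0 : qstate M) : nng (arrive K alpha beta gamma arr Q0).
Proof.
apply: diter_nng => y a ha; apply: arrive_type_nng; exact: types_is_type.
Qed.

Lemma step_nng (z : state M) : nng (step K alpha beta gamma arr z).
Proof.
apply: nng_bind; first exact: arrive_nng.
move=> Q1; apply: nng_bind; first exact: serve_nng.
by move=> f3; rewrite /nng /= ler01.
Qed.

End Model.

End P3.
Import P3.

Module P4.
Import Order.TTheory GRing.Theory Num.Theory.
Local Open Scope ring_scope.
Set Implicit Arguments. Unset Strict Implicit. Unset Printing Implicit Defensive.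

Lemma ord3 (c : 'I_3) : [\/ c = Cl, c = Ck | c = Cr].
Proof.
case: c => [[|[|[|n]]] h]; [apply: Or31|apply: Or32|apply: Or33|by []]; exact: val_inj.
Qed.

Section Serve.
Variables (R : realType) (M : nat) (K : 'I_M -> nat) (alpha beta gamma : R).
Hypotheses (hg : 0 < gamma) (hgb : gamma < beta) (hba : beta < alpha) (ha1 : alpha <= 1).
Notation r := (rate alpha beta gamma).
Ltac rl := move: hg hgb hba ha1; lra.

Definition sv (o : option 'I_3) : R := if o is Some c then (r c)^-1 else 0.
Definition psi (h : option 'I_3 -> R) (o : option 'I_3) : R :=
  if o is Some c then r c * h None + (1 - r c) * h (Some c) else h None.

Lemma serve1_marg (y : fstate M) a m h :
  E (serve1 alpha beta gamma y a) (fun g => h (g m)) = if a == m then psi h (y m) else h (y m).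
Proof.
rewrite /serve1; case ya: (y a) => [c|].
  rewrite /E big_cons big_seq1 /= ffunE.
  case: eqP => [ma|/eqP]; first by rewrite ma eqxx ya.
  by rewrite eq_sym => /negbTE ->; ring.
rewrite E_ret; case: eqP => // <-; by rewrite ya.
Qed.

Lemma diter_marg s (f : fstate M) m h : uniq s ->
  E (diter (serve1 alpha beta gamma) s f) (fun g => h (g m)) =
  if m \in s then psi h (f m) else h (f m).
Proof.
elim/last_ind: s h => [|s a IH] h; first by rewrite E_ret.
rewrite rcons_uniq => /andP [aS us].
rewrite diter_rcons E_bind.
have -> : E (diter (serve1 alpha beta gamma) s f) (fun y => E (serve1 alpha beta gamma y a) (fun g => h (g m)))
  = E (diter (serve1 alpha beta gamma) s f) (fun y => if a == m then psi h (y m) else h (y m)).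
  by apply: eq_bigr => p _; rewrite serve1_marg.
rewrite mem_rcons in_cons; case: eqP => [e|/eqP ne].
  by subst; rewrite eqxx /= IH // (negbTE aS).
rewrite eq_sym (negbTE ne) /= IH //.
Qed.

Lemma serve_marg (f : fstate M) m h :
  E (serve alpha beta gamma f) (fun g => h (g m)) = psi h (f m).
Proof. by rewrite /serve diter_marg ?enum_uniq // mem_enum. Qed.

Lemma W_ge0 (Q : qstate M) m : 0 <= W alpha beta gamma Q m.
Proof.
rewrite /W; apply: sumr_ge0 => c _; apply: divr_ge0; first exact: ler0n.
exact: ltW (r_gt0 hg hgb hba ha1 c).
Qed.

Lemma sv_ge0 o : 0 <= sv o.
Proof. case: o => [c|] //=; rewrite invr_ge0; exact: ltW (r_gt0 hg hgb hba ha1 c). Qed.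
Lemma sv_le o : sv o <= gamma^-1.
Proof. case: o => [c|] /=; [exact: rinv_le | rewrite invr_ge0; rl]. Qed.

Lemma pickq_pos (Q : qstate M) m c : pickq Q m = Some c -> (0 < Q (m, c))%N.
Proof. rewrite /pickq; do 3 (case: ifP => [? [<-] //|_]). by []. Qed.

Lemma pickq_none (Q : qstate M) m : pickq Q m = None -> forall c, Q (m, c) = 0%N.
Proof.
rewrite /pickq; case: ifP => // h1; case: ifP => // h2; case: ifP => // h3 _ c.
by case: (ord3 c) => ->; apply/eqP; rewrite -leqn0 leqNgt ?h1 ?h2 ?h3.
Qed.

Lemma sched (Q1 : qstate M) (f : fstate M) m :
  W alpha beta gamma (newQ Q1 f) m + sv (newf Q1 f m) = W alpha beta gamma Q1 m + sv (f m).
Proof.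
rewrite /newf ffunE; case fm: (f m) => [c|].
  congr (_ + _); rewrite /W; apply: eq_bigr => c' _; by rewrite /newQ ffunE /= fm (_ : (Some c == None) = false) // subn0.
case pq: (pickq Q1 m) => [c|]; last first.
  congr (_ + _); rewrite /W; apply: eq_bigr => c' _; by rewrite /newQ ffunE /= fm pq subn0.
rewrite /W (bigD1 c) //= [X in _ = X + _](bigD1 c) //= /newQ ffunE /= fm pq eqxx /=.
have hp := pickq_pos pq.
have -> : \sum_(i < 3 | i != c) ([ffun i0 => (Q1 i0 - ((f i0.1 == None) && (pickq Q1 i0.1 == Some i0.2)))%N] (m, i))%:R / r i
   = \sum_(i < 3 | i != c) (Q1 (m, i))%:R / r i.
  apply: eq_bigr => i ic; rewrite ffunE /= fm pq /=.
  have -> : (Some c == Some i) = false by apply/eqP => -[] /eqP; rewrite eq_sym (negbTE ic).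
  by rewrite subn0.
rewrite eqxx subn1; move: hp; case: (Q1 (m, c)) => // n _ /=.
by rewrite -[n.+1]addn1 natrD mulrDl mul1r addr0; ring.
Qed.

Lemma sched_none (Q1 : qstate M) (f : fstate M) m :
  newf Q1 f m = None -> W alpha beta gamma Q1 m + sv (f m) = 0.
Proof.
rewrite /newf ffunE; case fm: (f m) => [c|] // pq.
rewrite /= addr0 /W big1 // => c _; by rewrite (pickq_none pq) mul0r.
Qed.

Lemma inner (Q1 : qstate M) (f : fstate M) :
  E (serve alpha beta gamma (newf Q1 f))
    (fun f3 => \sum_m (W alpha beta gamma (newQ Q1 f) m + sv (f3 m)) ^+ 2)
  <= \sum_m ((W alpha beta gamma Q1 m + sv (f m)) ^+ 2
              - 2 * (W alpha beta gamma Q1 m + sv (f m)) + gamma^-1).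
Proof.
rewrite E_sum.
apply: ler_sum => m _.
rewrite (serve_marg (newf Q1 f) m (fun o => (W alpha beta gamma (newQ Q1 f) m + sv o) ^+ 2)).
rewrite -sched; case f2: (newf Q1 f m) => [c|] /=.
  set u := W _ _ _ _ _.
  have hc := r_gt0 hg hgb hba ha1 c; have hl := rinv_le hg hgb hba ha1 c.
  have -> : r c * (u + 0) ^+ 2 + (1 - r c) * (u + (r c)^-1) ^+ 2 =
      (u + (r c)^-1) ^+ 2 - 2 * (u + (r c)^-1) + (r c)^-1.
    by field; rewrite gt_eqF.
  by rewrite lerD2l.
have := sched_none f2; rewrite -sched f2 /= => ->.
rewrite expr0n /= mulr0 subr0 add0r invr_ge0; rl.
Qed.

End Serve.

End P4.
Import P4.

Module P5.
Import Order.TTheory GRing.Theory Num.Theory.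
Local Open Scope ring_scope.
Set Implicit Arguments. Unset Strict Implicit. Unset Printing Implicit Defensive.

Lemma all_bind (R : realType) (T U : eqType) (d : dist R T) (g : T -> dist R U) (Q : pred U) :
  (forall p, p \in d -> all (fun q => Q q.2) (g p.2)) -> all (fun q => Q q.2) (dbind d g).
Proof.
move=> H; rewrite /dbind all_flat; apply/allP => l /mapP [p pd ->].
by rewrite all_map; apply: H.
Qed.

Section Arr.
Variables (R : realType) (M : nat) (K : 'I_M -> nat) (alpha beta gamma : R)
  (arr : {set 'I_M} -> dist R nat).
Hypotheses (hg : 0 < gamma) (hgb : gamma < beta) (hba : beta < alpha) (ha1 : alpha <= 1).
Hypothesis harr : forall L : {set 'I_M}, is_type L -> is_pmf (arr L).
Notation r := (rate alpha beta gamma).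
Notation W := (W alpha beta gamma).
Ltac rl := move: hg hgb hba ha1; lra.

Lemma W_incq (Q : qstate M) (i : 'I_M * 'I_3) m :
  W (incq Q i) m = W Q m + (if m == i.1 then (r i.2)^-1 else 0).
Proof.
rewrite /W /incq; under eq_bigr => c _ do rewrite ffunE natrD mulrDl.
rewrite big_split /=; congr (_ + _).
case: i => m0 c0 /=; case: eqP => [->|ne].
  rewrite (bigD1 c0) //= eqxx mul1r big1 ?addr0 // => c cc.
  by rewrite xpair_eqE eqxx /= (negbTE cc) mul0r.
by rewrite big1 // => c _; rewrite xpair_eqE; case: eqP => //= _; rewrite mul0r.
Qed.

Variables (Q0 : qstate M) (f : fstate M).
Definition U0 m := W Q0 m + sv alpha beta gamma (f m).
Definition ell (Q : qstate M) := \sum_m U0 m * W Q m.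

Lemma ell_incq Q m c : ell (incq Q (m, c)) = ell Q + U0 m / r c.
Proof.
rewrite /ell; under eq_bigr => m' _ do rewrite W_incq mulrDr.
rewrite big_split /=; congr (_ + _).
rewrite (bigD1 m) //= eqxx big1 ?addr0 // => m' /negbTE -> ; by rewrite mulr0.
Qed.

Lemma U0_ge0 m : 0 <= U0 m.
Proof. apply: addr_ge0; [exact: W_ge0 | exact: sv_ge0]. Qed.

Lemma argmin_ex (L : {set 'I_M}) (m0 : 'I_M) :
  exists2 mL, mL \in best K alpha beta gamma Q0 L & forall m, cost K alpha beta gamma Q0 L mL <= cost K alpha beta gamma Q0 L m.
Proof.
case: (@arg_minP _ _ _ m0 xpredT (cost K alpha beta gamma Q0 L) isT) => mL _ H.
exists mL; last by move=> m; apply: H.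
rewrite /best inE; apply/forallP => m; by apply: H.
Qed.

Notation cL L mL := (cost K alpha beta gamma Q0 L mL + gamma^-1 * gamma^-1).

Lemma best_bound (L : {set 'I_M}) mL m : mL \in best K alpha beta gamma Q0 L ->
  m \in best K alpha beta gamma Q0 L -> U0 m / r (cls K L m) <= cL L mL.
Proof.
move=> _; rewrite /best inE => /forallP /(_ mL) hc.
rewrite /U0 mulrDl; apply: lerD; first exact: hc.
apply: ler_pM; [exact: sv_ge0 | rewrite invr_ge0; exact: ltW (r_gt0 hg hgb hba ha1 _) |
  exact: sv_le | exact: rinv_le].
Qed.

Lemma route_E (L : {set 'I_M}) mL Q : mL \in best K alpha beta gamma Q0 L ->
  nng (route1 K alpha beta gamma Q0 L Q) /\ mass (route1 K alpha beta gamma Q0 L Q) = 1 /\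
  E (route1 K alpha beta gamma Q0 L Q) ell <= ell Q + cL L mL.
Proof.
move=> hmL; have hc : (0 < #|best K alpha beta gamma Q0 L|)%N by apply/card_gt0P; exists mL.
split; first exact: route1_nng.
split.
  rewrite /route1 mass_bind.
  have -> : E (unif R (best K alpha beta gamma Q0 L)) (fun x => mass (dret (incq Q (x, cls K L x)))) =
     E (unif R (best K alpha beta gamma Q0 L)) (fun _ => 1).
    by apply: eq_bigr => p _; rewrite /mass big_seq1.
  by rewrite E_const mul1r unif_mass.
rewrite /route1 E_bind.
have -> : E (unif R (best K alpha beta gamma Q0 L)) (fun x => E (dret (incq Q (x, cls K L x))) ell) =
   E (unif R (best K alpha beta gamma Q0 L)) (fun x => ell Q + U0 x / r (cls K L x)).
  by apply: eq_bigr => p _; rewrite E_ret ell_incq.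
apply: le_trans (@E_le _ _ _ (mem (best K alpha beta gamma Q0 L)) _ (fun _ => ell Q + cL L mL) (unif_nng _ _) (unif_supp _ _) _) _.
  by move=> x hx; rewrite lerD2l; apply: best_bound.
by rewrite E_const unif_mass // mulr1.
Qed.

Definition cLf (L : {set 'I_M}) : R :=
  if [pick m in best K alpha beta gamma Q0 L] is Some mL then cL L mL else 0.

Lemma cLf_spec L : is_type L ->
  exists2 mL, mL \in best K alpha beta gamma Q0 L & cLf L = cL L mL.
Proof.
move=> tL; rewrite /cLf; case: pickP => [mL hm|]; first by exists mL.
have : (0 < #|L|)%N by move: tL; rewrite /is_type => /eqP ->.
case/card_gt0P => m0 _; case: (argmin_ex L m0) => mL hm _ /(_ mL).
by rewrite hm.
Qed.

Lemma sum_iota_const n (c : R) : \sum_(a <- iota 0 n) c = n%:R * c.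
Proof. by rewrite big_const_seq count_predT size_iota iter_addr_0 mulr_natl. Qed.

Lemma pmf_mass L : is_type L -> mass (arr L) = 1.
Proof. by case/harr. Qed.

Lemma arrive_type_E (L : {set 'I_M}) Q : is_type L ->
  nng (arrive_type K alpha beta gamma arr Q0 Q L) /\ mass (arrive_type K alpha beta gamma arr Q0 Q L) = 1 /\
  E (arrive_type K alpha beta gamma arr Q0 Q L) ell <= ell Q + mean (arr L) * cLf L.
Proof.
move=> tL; case: (cLf_spec tL) => mL hmL ->.
have hr := fun Q' => route_E Q' hmL.
split; first exact: arrive_type_nng.
split.
  rewrite /arrive_type mass_bind.
  have -> : E (arr L) (fun n => mass (diter (fun Q' (_ : nat) => route1 K alpha beta gamma Q0 L Q') (iota 0 n) Q)) =
     E (arr L) (fun _ => 1).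
    apply: eq_bigr => p _; congr (_ * _); apply: diter_mass => y a _.
    by case: (hr y) => _ [].
  by rewrite E_const mul1r pmf_mass.
rewrite /arrive_type E_bind.
apply: le_trans (@E_le _ _ _ predT _ (fun n => ell Q + n%:R * cL L mL) _ (all_true _) _) _.
- by case: (harr tL).
- move=> n _; rewrite -sum_iota_const; apply: diter_E => y a _; exact: hr.
rewrite E_add E_const pmf_mass // mulr1 lerD2l.
have -> : E (arr L) (fun n => n%:R * cL L mL) = E (arr L) (fun n => cL L mL * n%:R).
  by rewrite /E; apply: eq_bigr => p _; congr (_ * _); rewrite mulrC.
by rewrite E_scale mulrC.
Qed.

Lemma arrive_E :
  E (arrive K alpha beta gamma arr Q0) ell <= ell Q0 + \sum_(L <- types M) mean (arr L) * cLf L.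
Proof.
apply: diter_E => y a ha; apply: arrive_type_E; exact: types_is_type.
Qed.

Lemma arrive_mass : mass (arrive K alpha beta gamma arr Q0) = 1.
Proof.
apply: diter_mass => y a ha; case: (arrive_type_E y (types_is_type ha)) => _ []; done.
Qed.

Definition NL (L : {set 'I_M}) : nat := (\max_(p <- arr L) p.2)%N.
Definition Nt : nat := (\sum_(L <- types M) NL L)%N.

Lemma route_supp (L : {set 'I_M}) (y : qstate M) n :
  all (fun p : R * qstate M => [forall i, (y i <= p.2 i <= y i + n)%N])
    (diter (fun Q' (_ : nat) => route1 K alpha beta gamma Q0 L Q') (iota 0 n) y).
Proof.
have := @diter_all _ _ _ (fun Q' (_ : nat) => route1 K alpha beta gamma Q0 L Q')
  (fun s (Q : qstate M) => [forall i, (y i <= Q i <= y i + size s)%N]) (iota 0 n) y.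
rewrite size_iota; apply.
  by apply/forallP => i /=; rewrite addn0 leqnn.
move=> s a Q /forallP HQ; rewrite /route1; apply: (all_bind (Q := fun Q2 : qstate M => [forall i, (y i <= Q2 i <= y i + size (rcons s a))%N])) => p _ /=; rewrite andbT.
apply/forallP => i; rewrite /incq ffunE size_rcons; move: (HQ i); case: (_ == _); rewrite /= ?addn0 ?addn1; lia.
Qed.

Lemma arrive_supp :
  all (fun p : R * qstate M => [forall i, (Q0 i <= p.2 i <= Q0 i + Nt)%N]) (arrive K alpha beta gamma arr Q0).
Proof.
have := @diter_all _ _ _ (arrive_type K alpha beta gamma arr Q0)
  (fun s (Q : qstate M) => [forall i, (Q0 i <= Q i <= Q0 i + \sum_(L <- s) NL L)%N]) (types M) Q0.
apply.
  by apply/forallP => i /=; rewrite big_nil addn0 leqnn.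
move=> s a y /forallP Hy; rewrite /arrive_type.
apply: (all_bind (Q := fun Q2 : qstate M => [forall i, (Q0 i <= Q2 i <= Q0 i + \sum_(L <- rcons s a) NL L)%N])) => p pd.
have hp : (p.2 <= NL a)%N by apply: (@leq_bigmax_seq _ (arr a) xpredT (fun q => q.2) p).
apply: sub_all (route_supp a y p.2) => Q /forallP HQ; apply/forallP => i.
rewrite -cats1 big_cat big_seq1 /=; move: hp (Hy i) (HQ i); set S0 := (\sum_(_ <- s) _)%N; move: (p.2 : nat) (Q.2 i : nat) (y i : nat) (Q0 i : nat) (NL a : nat) S0 => n1 n2 n3 n4 n5 n6; lia.
Qed.

End Arr.

End P5.
Import P5.

Module P6.
Import Order.TTheory GRing.Theory Num.Theory.
Local Open Scope ring_scope.
Set Implicit Arguments. Unset Strict Implicit. Unset Printing Implicit Defensive.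

Section Drift.
Variables (R : realType) (M : nat) (K : 'I_M -> nat) (alpha beta gamma : R)
  (arr : {set 'I_M} -> dist R nat).
Hypotheses (hg : 0 < gamma) (hgb : gamma < beta) (hba : beta < alpha) (ha1 : alpha <= 1).
Hypothesis harr : forall L : {set 'I_M}, is_type L -> is_pmf (arr L).
Notation r := (rate alpha beta gamma).
Notation W := (W alpha beta gamma).
Notation sv := (sv alpha beta gamma).
Ltac rl := move: hg hgb hba ha1; lra.

Definition V (z : state M) : R := \sum_m (W z.1 m + sv (z.2 m)) ^+ 2.
Definition A : R := (Nt arr)%:R * gamma^-1 *+ 3.

Variables (Q0 : qstate M) (f : fstate M).
Notation U0 := (U0 alpha beta gamma Q0 f).
Notation ell := (ell alpha beta gamma Q0 f).

Lemma a_bounds (Q1 : qstate M) m : [forall i, (Q0 i <= Q1 i <= Q0 i + Nt arr)%N] ->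
  0 <= W Q1 m - W Q0 m <= A.
Proof.
move=> /forallP H.
have -> : W Q1 m - W Q0 m = \sum_c ((Q1 (m, c))%:R - (Q0 (m, c))%:R) / r c.
  by rewrite /Defs.W -sumrB; apply: eq_bigr => c _; rewrite mulrBl.
apply/andP; split.
  apply: sumr_ge0 => c _; apply: divr_ge0; last exact: ltW (r_gt0 hg hgb hba ha1 c).
  by rewrite subr_ge0 ler_nat; case/andP: (H (m, c)).
have -> : A = \sum_(c < 3) ((Nt arr)%:R * gamma^-1) by rewrite sumr_const card_ord.
apply: ler_sum => c _.
have hi := H (m, c); case/andP: hi => h1 h2.
apply: ler_pM.
- by rewrite subr_ge0 ler_nat.
- rewrite invr_ge0; exact: ltW (r_gt0 hg hgb hba ha1 c).
- by rewrite lerBlDl -natrD ler_nat.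
- exact: rinv_le.
Qed.

Definition C0 : R := \sum_m (U0 m ^+ 2 - 2 * U0 m + A ^+ 2 + gamma^-1 - 2 * (U0 m * W Q0 m)).

Lemma pointwise (Q1 : qstate M) : [forall i, (Q0 i <= Q1 i <= Q0 i + Nt arr)%N] ->
  \sum_m ((W Q1 m + sv (f m)) ^+ 2 - 2 * (W Q1 m + sv (f m)) + gamma^-1) <= C0 + 2 * ell Q1.
Proof.
move=> H; rewrite /C0 /P5.ell mulr_sumr -big_split /=; apply: ler_sum => m _.
have /andP [h0 hA] := a_bounds m H.
have hu := U0_ge0 hg hgb hba ha1 Q0 f m.
rewrite /P5.U0 in hu *.
move: h0 hA hu; set w1 := W Q1 m; set w0 := W Q0 m; set s := sv (f m) => h0 hA hu.
nra.
Qed.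

Lemma drift_raw :
  E (step K alpha beta gamma arr (Q0, f)) V <=
  C0 + 2 * (ell Q0 + \sum_(L <- types M) mean (arr L) * cLf K alpha beta gamma Q0 L).
Proof.
rewrite /step E_bind /=.
apply: le_trans (@E_le _ _ _ predT _
   (fun Q1 => \sum_m ((W Q1 m + sv (f m)) ^+ 2 - 2 * (W Q1 m + sv (f m)) + gamma^-1))
   (@arrive_nng R M K alpha beta gamma arr harr Q0) (all_true _) _) _.
  move=> Q1 _; rewrite E_bind.
  have -> : E (serve alpha beta gamma (newf Q1 f)) (fun f3 => E (dret (newQ Q1 f, f3)) V) =
     E (serve alpha beta gamma (newf Q1 f)) (fun f3 => \sum_m (W (newQ Q1 f) m + sv (f3 m)) ^+ 2).
    by apply: eq_bigr => p _; rewrite E_ret.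
  exact: inner.
apply: le_trans (@E_le _ _ _ (fun Q1 : qstate M => [forall i, (Q0 i <= Q1 i <= Q0 i + Nt arr)%N]) _
   (fun Q1 => C0 + 2 * ell Q1)
   (@arrive_nng R M K alpha beta gamma arr harr Q0) (arrive_supp K arr hg hgb hba ha1 Q0) _) _.
  by move=> Q1 H; apply: pointwise.
rewrite E_add E_const (arrive_mass K hg hgb hba ha1 harr Q0 f) mulr1 E_scale lerD2l.
rewrite ler_pM2l ?ltr0n //; exact: arrive_E.
Qed.

End Drift.

End P6.
Import P6.

Module P7.
Import Order.TTheory GRing.Theory Num.Theory.
Local Open Scope ring_scope.
Set Implicit Arguments. Unset Strict Implicit. Unset Printing Implicit Defensive.

Section Cap.
Variables (R : realType) (M : nat) (K : 'I_M -> nat) (alpha beta gamma : R)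
  (arr : {set 'I_M} -> dist R nat).
Hypotheses (hg : 0 < gamma) (hgb : gamma < beta) (hba : beta < alpha) (ha1 : alpha <= 1).
Hypothesis harr : forall L : {set 'I_M}, is_type L -> is_pmf (arr L).
Variable lm : {set 'I_M} -> 'I_M -> R.
Hypothesis lm0 : forall L m, 0 <= lm L m.
Hypothesis lmS : forall L, is_type L -> mean (arr L) = \sum_(m < M) lm L m.
Notation r := (rate alpha beta gamma).
Notation W := (W alpha beta gamma).
Notation sv := (sv alpha beta gamma).

Definition load m := \sum_(L <- types M) lm L m / r (cls K L m).
Definition Mt := \sum_(L <- types M) mean (arr L).
Definition g2 := gamma^-1 * gamma^-1.

Variables (Q0 : qstate M) (f : fstate M).
Notation U0 := (U0 alpha beta gamma Q0 f).

Lemma cap_bound :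
  \sum_(L <- types M) mean (arr L) * cLf K alpha beta gamma Q0 L <=
  \sum_m U0 m * load m + g2 * Mt.
Proof.
have -> : \sum_m U0 m * load m + g2 * Mt =
    \sum_(L <- types M) (\sum_m lm L m * (U0 m / r (cls K L m) + g2)).
  rewrite /load /Mt mulr_sumr.
  under eq_bigr => m _ do rewrite mulr_sumr.
  rewrite exchange_big /= -big_split /= big_seq [RHS]big_seq.
  apply: eq_bigr => L hL; rewrite lmS ?types_is_type // mulr_sumr -big_split /=.
  by apply: eq_bigr => m _; ring.
rewrite big_seq [X in _ <= X]big_seq; apply: ler_sum => L hL.
have tL := types_is_type hL.
case: (@cLf_spec R M K alpha beta gamma Q0 L tL) => mL hmL ->.
rewrite lmS // mulr_suml; apply: ler_sum => m _; apply: ler_wpM2l => //.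
rewrite lerD2r; move: hmL; rewrite /best inE => /forallP /(_ m) hc.
apply: le_trans hc _; rewrite /cost ler_wpM2r //.
  rewrite invr_ge0; exact: ltW (r_gt0 hg hgb hba ha1 _).
by rewrite /P5.U0 lerDl sv_ge0.
Qed.

End Cap.

End P7.
Import P7.

Module P8.
Import Order.TTheory GRing.Theory Num.Theory.
Local Open Scope ring_scope.
Set Implicit Arguments. Unset Strict Implicit. Unset Printing Implicit Defensive.

Section Final.
Variables (R : realType) (M : nat) (K : 'I_M -> nat) (alpha beta gamma : R)
  (arr : {set 'I_M} -> dist R nat).
Hypotheses (hg : 0 < gamma) (hgb : gamma < beta) (hba : beta < alpha) (ha1 : alpha <= 1).
Hypothesis harr : forall L : {set 'I_M}, is_type L -> is_pmf (arr L).
Variable lm : {set 'I_M} -> 'I_M -> R.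
Hypothesis lm0 : forall L m, 0 <= lm L m.
Hypothesis lmS : forall L, is_type L -> mean (arr L) = \sum_(m < M) lm L m.
Notation W := (W alpha beta gamma).
Notation load := (load K alpha beta gamma lm).

Definition Cst : R := (A gamma arr ^+ 2 + gamma^-1) *+ M + 2 * (g2 gamma * Mt arr).

Lemma drift (Q0 : qstate M) (f : fstate M) :
  E (step K alpha beta gamma arr (Q0, f)) (V alpha beta gamma) <=
  V alpha beta gamma (Q0, f) + Cst - \sum_m 2 * U0 alpha beta gamma Q0 f m * (1 - load m).
Proof.
apply: le_trans (@drift_raw R M K alpha beta gamma arr hg hgb hba ha1 harr Q0 f) _.
apply: le_trans (_ : _ <= C0 alpha beta gamma arr Q0 f + 2 * (ell alpha beta gamma Q0 f Q0 +
   (\sum_m U0 alpha beta gamma Q0 f m * load m + g2 gamma * Mt arr))) _.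
  rewrite lerD2l ler_pM2l ?ltr0n // lerD2l.
  exact: (@cap_bound R M K alpha beta gamma arr hg hgb hba ha1 lm lm0 lmS Q0 f).
rewrite le_eqVlt; apply/orP; left; apply/eqP.
rewrite /C0 /P5.ell /V /Cst /=.
have -> : (A gamma arr ^+ 2 + gamma^-1) *+ M = \sum_(m < M) (A gamma arr ^+ 2 + gamma^-1)
  by rewrite sumr_const card_ord.
set u := P5.U0 alpha beta gamma Q0 f.
have -> : \sum_m (W Q0 m + sv alpha beta gamma (f m)) ^+ 2 = \sum_m u m ^+ 2 by [].
rewrite !big_split /= -!mulr_sumr -!sumrN !big_split /= -!mulr_sumr.
have -> : \sum_(i < M) - (2 * u i * (1 - load i)) =
  \sum_(i < M) - (2 * u i) + 2 * \sum_(i < M) (u i * load i).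
  rewrite mulr_sumr -big_split; apply: eq_bigr => i _. rewrite /=; ring.
rewrite !sumrN -!mulr_sumr /=; ring.
Qed.

End Final.

End P8.
Import P8.

Import Order.TTheory GRing.Theory Num.Theory.
Local Open Scope ring_scope.

Lemma term_le_sum {R : realType} {M : nat} (F : 'I_M -> R) m :
  (forall i, 0 <= F i) -> F m <= \sum_i F i.
Proof.
move=> h; rewrite (bigD1 m) //= lerDl; apply: sumr_ge0 => i _; exact: h.
Qed.

Theorem theorem3p3 (R : realType) (M : nat) (K : 'I_M -> nat)
  (alpha beta gamma : R) (arr : {set 'I_M} -> dist R nat) :
  0 < gamma -> gamma < beta -> beta < alpha -> alpha <= 1 ->
  (forall L : {set 'I_M}, is_type L -> is_pmf (arr L)) ->
  in_capacity K alpha beta gamma (fun L => mean (arr L)) ->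
  positive_recurrent K alpha beta gamma arr.
Proof.
move=> hg hgb hba ha1 harr [lm [lm0 [lmS hload]]].
pose ld := load K alpha beta gamma lm.
have hl : forall m, ld m < 1.
  move=> m; have := hload m; congr (_ < _).
  rewrite /ld /load /types big_enum /=; apply: eq_bigl => L; by rewrite inE.
pose C := Cst gamma arr.
pose b m := (C + 1) / (2 * (1 - ld m)).
pose bt := \sum_m `|b m|.
have bt0 : 0 <= bt by apply: sumr_ge0 => m _.
pose N := Num.Def.archi_bound bt.
have hN : bt < N%:R by apply: archi_boundP.
pose B := [seq ([ffun i => nat_of_ord (g i)], h) |
            g : {ffun 'I_M * 'I_3 -> 'I_N.+1} <- enum {ffun 'I_M * 'I_3 -> 'I_N.+1},
            h : {ffun 'I_M -> option 'I_3} <- enum {ffun 'I_M -> option 'I_3}].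
apply: (@foster R M K alpha beta gamma arr B (V alpha beta gamma)).
- exact: step_nng.
- move=> z; apply: sumr_ge0 => m _; exact: sqr_ge0.
move=> [Q0 f] zB.
have hd := @drift R M K alpha beta gamma arr hg hgb hba ha1 harr lm lm0 lmS Q0 f.
set D := \sum_m _ in hd.
case: (lerP (C + 1) D) => hD; first by move: hd hD; rewrite /C; lra.
exfalso; move/negP: zB; apply.
have hterm : forall m, 0 <= 2 * U0 alpha beta gamma Q0 f m * (1 - ld m).
  move=> m; apply: mulr_ge0; first by apply: mulr_ge0 => //; exact: U0_ge0.
  by have := hl m; lra.
have hQ : forall i, (Q0 i <= N)%N.
  move=> [m c].
  have h1 := term_le_sum _ m hterm.
  have hx : 0 < 2 * (1 - ld m) by have := hl m; lra.
  have hU : U0 alpha beta gamma Q0 f m <= b m.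
    rewrite -(ler_pM2r hx) /b mulfVK ?gt_eqF //.
    move: h1; rewrite -/D => h1; move: h1 hD; rewrite -/C; nra.
  have hW : (Q0 (m, c))%:R <= U0 alpha beta gamma Q0 f m.
    rewrite /U0 -[X in X <= _]addr0; apply: lerD; last exact: sv_ge0.
    apply: le_trans (_ : _ <= (Q0 (m, c))%:R / rate alpha beta gamma c) _.
      rewrite -[X in X <= _]mulr1 ler_wpM2l //; exact: rinv_ge1.
    rewrite /Defs.W (term_le_sum (fun c => (Q0 (m, c))%:R / rate alpha beta gamma c) c) //.
    move=> c'; apply: divr_ge0 => //; exact: ltW (r_gt0 hg hgb hba ha1 c').
  have hb : b m <= bt by apply: le_trans (ler_norm _) (term_le_sum (fun m => `|b m|) m _).
  have : (Q0 (m, c))%:R < N%:R :> R by lra.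
  by rewrite ltr_nat => /ltnW.
pose g := [ffun i => inord (Q0 i) : 'I_N.+1].
have -> : (Q0, f) = (fun g h => ([ffun i => nat_of_ord (g i)], h)) g f.
  congr (_, _); apply/ffunP => i; rewrite !ffunE inordK //; exact: hQ.
by apply: allpairs_f; rewrite mem_enum.
Qed.
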